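(* Fix integers $m\ge 1$ and $n\ge 0$. There is a function $P_{n,m}:\mathbb{Z}_{\ge 0}\to\mathbb{Q}$ (in fact a polynomial) depending only on $n$ and $m$ with the following property. For every set $a=\{a_1,\dots,a_m\}$ of $m$ multiplicatively independent integers $a_i\ge 2$, there is $N=N(n,a)$ such that for every $s\ge 1$ and all positive integers $k_1,\dots,k_s$ for which $k_1+1,\dots,k_s+1$ are primes larger than $N$, the number of $n$-element independent sets of the disjoint union $G(a,k_1)+G(a,k_2)+\cdots+G(a,k_s)$ equals $P_{n,m}(k_1+\cdots+k_s)$. In other words, this number depends only on $n$, $m$ and $\sum_i k_i$.
   Context: A set $\{a_1,\dots,a_m\}$ of positive integers is multiplicatively independent if $a_1^{i_1}\cdots a_m^{i_m}=1$ with integers $i_1,\dots,i_m$ implies $i_1=\dots=i_m=0$. For such $a$ and a positive integer $k$, $G(a,k)$ is the simple graph with vertex set $\{1,2,\dots,k\}$ in which distinct vertices $i,j$ are adjacent if and only if $i\equiv a_rj\pmod{k+1}$ or $j\equiv a_ri\pmod{k+1}$ for some $1\le r\le m$. $G_1+G_2+\cdots+G_s$ denotes the disjoint union of graphs. An independent set is a set of vertices no two of which are adjacent. *)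

(* Defs.v *)
From HB Require Import structures.
From mathcomp Require Import all_boot all_order all_algebra.
Set Implicit Arguments. Unset Strict Implicit. Unset Printing Implicit Defensive.
Import Order.TTheory GRing.Theory Num.Theory.

Definition mult_indep (a : seq nat) : Prop :=
  forall e : 'I_(size a) -> int,
    (\prod_(r < size a) ((nth 0%N a r)%:R : rat) ^ (e r) = 1)%R ->
    forall r, e r = 0%R.

(* Adjacency in G(a,k) on vertex set {1,...,k}. *)
Definition gadj (a : seq nat) (k i j : nat) : bool :=
  (i != j) &&
  has (fun ar => (i == ar * j %[mod k.+1]) || (j == ar * i %[mod k.+1])) a.

(* Vertices of G(a,k_1)+...+G(a,k_s), ks = [:: k_1; ...; k_s]:
   the pair (t, i) stands for vertex i.+1 of the t-th component. *)
Definition uvert (ks : seq nat) : finType :=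
  {t : 'I_(size ks) & 'I_(nth 0%N ks t)}.

Definition uadj (a ks : seq nat) (u v : uvert ks) : bool :=
  (tag u == tag v) &&
  gadj a (nth 0%N ks (tag u)) (nat_of_ord (tagged u)).+1 (nat_of_ord (tagged v)).+1.

Definition indep_set (a ks : seq nat) (S : {set uvert ks}) : bool :=
  [forall u in S, forall v in S, ~~ uadj a u v].

Definition num_indep (n : nat) (a ks : seq nat) : nat :=
  #|[set S : {set uvert ks} | (#|S| == n) && indep_set a S]|.

(* Main.v *)
Require Import Defs.
From HB Require Import structures.
From mathcomp Require Import all_boot all_order all_algebra.
From mathcomp Require Import zify ring.
Import Order.TTheory GRing.Theory Num.Theory.
Set Implicit Arguments. Unset Strict Implicit. Unset Printing Implicit Defensive.

Definition bnd (m : nat) (M : nat) (d : 'rV[int]_m) : bool :=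
  [forall r, (absz (d ord0 r) <= M)%N].

Lemma bndN m M (d : 'rV[int]_m) : bnd M d -> bnd M (- d).
Proof.
move=> /forallP h; apply/forallP => r; rewrite mxE abszN; exact: h.
Qed.

Lemma bndW m M M' (d : 'rV[int]_m) : (M <= M')%N -> bnd M d -> bnd M' d.
Proof.
move=> le /forallP h; apply/forallP => r; exact: leq_trans (h r) le.
Qed.

Lemma bnd0 m M : bnd M (0 : 'rV[int]_m).
Proof. by apply/forallP => r; rewrite mxE. Qed.

Lemma abszB (x y : int) : (absz (x - y) <= absz x + absz y)%N.
Proof.
have := leqD_dist x 0 y. by rewrite subr0 sub0r abszN.
Qed.

Lemma bndB m M (d e : 'rV[int]_m) : bnd M d -> bnd M e -> bnd (M * 2) (d - e).
Proof.
move=> /forallP h1 /forallP h2; apply/forallP => r; rewrite !mxE.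
apply: leq_trans (abszB _ _) _; rewrite muln2 -addnn; exact: leq_add.
Qed.

Local Open Scope ring_scope.

Notation atomT m := (nat * nat * 'rV[int]_m)%type.

Fixpoint allseqs (V : finType) (n : nat) : seq (seq V) :=
  if n is n'.+1 then [seq x :: s | x <- enum V, s <- allseqs V n'] else [:: [::]].

Definition holds (V : finType) m (act : V -> 'rV[int]_m -> V) (x0 : V)
  (s : seq V) (t : atomT m) : bool :=
  nth x0 s t.1.2 == act (nth x0 s t.1.1) t.2.

Definition cnt (V : finType) m (act : V -> 'rV[int]_m -> V) (x0 : V) n
  (ats : seq (atomT m)) : rat :=
  (\sum_(s <- allseqs V n) \prod_(t <- ats) (holds act x0 s t)%:R)%R.

Fixpoint selfok m (ats : seq (atomT m)) : bool :=
  if ats is t :: ats' then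
    ((t.1.1 != 0%N) || (t.1.2 != 0%N) || (t.2 == 0)) && selfok ats'
  else true.

Fixpoint linksL m (ats : seq (atomT m)) : seq (nat * 'rV[int]_m) :=
  if ats is t :: ats' then
    if (t.1.1 == 0%N) && (t.1.2 != 0%N) then (t.1.2.-1, - t.2) :: linksL ats'
    else if (t.1.1 != 0%N) && (t.1.2 == 0%N) then (t.1.1.-1, t.2) :: linksL ats'
    else linksL ats'
  else [::].

Fixpoint restA m (ats : seq (atomT m)) : seq (atomT m) :=
  if ats is t :: ats' then
    if (t.1.1 != 0%N) && (t.1.2 != 0%N) then (t.1.1.-1, t.1.2.-1, t.2) :: restA ats'
    else restA ats'
  else [::].

Fixpoint Qp m (n : nat) (ats : seq (atomT m)) : {poly rat} :=
  match n with
  | 0 => ((all (fun t : atomT m => t.2 == 0) ats)%:R)%:P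
  | n'.+1 =>
    if selfok ats then
      match linksL ats with
      | [::] => Qp n' (restA ats) * 'X
      | (i0, d0) :: L' => Qp n' (restA ats ++ [seq (i0, u.1, d0 - u.2) | u <- L'])
      end
    else 0
  end.

Section Core.
Variables (V : finType) (m : nat) (act : V -> 'rV[int]_m -> V) (x0 : V).
Hypothesis actA : forall x d e, act (act x d) e = act x (d + e).
Hypothesis act0 : forall x, act x 0 = x.

Lemma act_swap y d0 z e : (act y d0 == act z e) = (z == act y (d0 - e)).
Proof.
apply/eqP/eqP => [h | ->].
  have : act (act z e) (- e) = act (act y d0) (- e) by rewrite h.
  by rewrite !actA subrr act0 => ->.
by rewrite actA addrNK.
Qed.

Lemma act_swap1 x y d : (y == act x d) = (x == act y (- d)).
Proof.
apply/eqP/eqP => [-> | ->]; first by rewrite actA subrr act0.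
by rewrite actA addNr act0.
Qed.

Lemma peel_prod (B : nat) (ats : seq (atomT m)) x s :
  (forall d, bnd B d -> act x d = x -> d = 0) ->
  all (fun t : atomT m => bnd B t.2) ats ->
  (\prod_(t <- ats) (holds act x0 (x :: s) t)%:R : rat)%R =
  ((selfok ats)%:R * \prod_(u <- linksL ats) (x == act (nth x0 s u.1) u.2)%:R
    * \prod_(t <- restA ats) (holds act x0 s t)%:R)%R.
Proof.
move=> inj; elim: ats => [|[[i j] d] ats IH] /=; first by rewrite !big_nil !mulr1.
case/andP=> bd /IH IH'; rewrite big_cons IH'.
case: i => [|i]; case: j => [|j] /=.
- rewrite /holds /=; case: (eqVneq d 0) => [->|dn0]; first by rewrite act0 eqxx /= mul1r.
  have -> : (x == act x d) = false.
    by apply/eqP => h; move/eqP: dn0; apply; apply: inj => //; rewrite -h.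
  by rewrite !mul0r.
- rewrite big_cons /holds /= act_swap1; ring.
- rewrite big_cons /holds /=; ring.
- rewrite big_cons /holds /=; ring.
Qed.


Lemma sum_links (L : seq (nat * 'rV[int]_m)) i0 d0 s :
  (\sum_(x <- enum V) \prod_(u <- (i0, d0) :: L) (x == act (nth x0 s u.1) u.2)%:R : rat)
  = \prod_(u <- L) (holds act x0 s (i0, u.1, d0 - u.2))%:R.
Proof.
rewrite big_enum /= (bigD1 (act (nth x0 s i0) d0)) //= big_cons eqxx mul1r.
rewrite [X in _ + X]big1 ?addr0.
  by apply: eq_bigr => u _; rewrite /holds /= act_swap.
by move=> x /negbTE nx; rewrite big_cons /= nx mul0r.
Qed.

Lemma all_restA B (ats : seq (atomT m)) :
  all (fun t : atomT m => bnd B t.2) ats -> all (fun t : atomT m => bnd B t.2) (restA ats).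
Proof.
elim: ats => [|[[i j] d] ats IH] //= /andP[bd /IH h].
by case: ifP => //= _; rewrite bd h.
Qed.

Lemma all_linksL B (ats : seq (atomT m)) :
  all (fun t : atomT m => bnd B t.2) ats -> all (fun u : nat * 'rV[int]_m => bnd B u.2) (linksL ats).
Proof.
elim: ats => [|[[i j] d] ats IH] //= /andP[bd /IH h].
case: ifP => _ /=; first by rewrite bndN.
by case: ifP => _ //=; rewrite bd h.
Qed.

Lemma base_prod (ats : seq (atomT m)) B :
  (forall d, bnd B d -> act x0 d = x0 -> d = 0) ->
  all (fun t : atomT m => bnd B t.2) ats ->
  (\prod_(t <- ats) (holds act x0 [::] t)%:R : rat) = (all (fun t : atomT m => t.2 == 0) ats)%:R.
Proof.
move=> inj; elim: ats => [|[[i j] d] ats IH]; first by rewrite big_nil.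
move=> /= /andP[bd /IH h]; rewrite big_cons h /holds /= !nth_nil.
case: (eqVneq d 0) => [->|dn0]; first by rewrite act0 eqxx /= mul1r.
have -> : (x0 == act x0 d) = false.
  by apply/eqP => h'; move/eqP: dn0; apply; apply: inj => //; rewrite -h'.
by rewrite !mul0r.
Qed.

Lemma cnt_Qp n : forall B (ats : seq (atomT m)),
  all (fun t : atomT m => bnd B t.2) ats ->
  (forall x d, bnd (B * 2 ^ n)%N d -> act x d = x -> d = 0) ->
  cnt act x0 n ats = (Qp n ats).[#|V|%:R].
Proof.
elim: n => [|n IH] B ats ba inj.
  rewrite /cnt /= big_seq1 hornerC (base_prod (B := B)) //.
  by move=> d bd; apply: inj; rewrite muln1.
rewrite /cnt /= big_allpairs_dep /= exchange_big /=.
have injB : forall x d, bnd B d -> act x d = x -> d = 0.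
  move=> x d bd; apply: inj; apply: bndW bd; rewrite -{1}[B]muln1 leq_mul2l.
  by rewrite expn_gt0 orbT.
under eq_bigr => s _ do under eq_bigr => x _ do rewrite (peel_prod s (injB x) ba).
case: (selfok ats); last first.
  rewrite horner0 big1 // => s _; rewrite big1 // => x _; by rewrite !mul0r.
case E: (linksL ats) => [|[i0 d0] L'].
  rewrite hornerMX -(IH B) ?all_restA //; last first.
    by move=> x d bd; apply: inj; rewrite expnS mulnCA (mulnC 2) ; apply: bndW bd; lia.
  rewrite /cnt mulr_suml; apply: eq_bigr => s _.
  under eq_bigr => x _ do rewrite big_nil !mul1r.
  by rewrite big_enum /= sumr_const mulr_natr.
rewrite -(IH (B * 2)%N); last first.
- by move=> x d bd; apply: inj; rewrite expnS mulnA.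
- have ba2 : all (fun t : atomT m => bnd (B * 2)%N t.2) ats.
    by apply/allP => t /(allP ba); apply: bndW; lia.
  rewrite all_cat all_restA //=.
  have := all_linksL ba; rewrite E /= => /andP[b0 bL].
  apply/allP => t /mapP[u uL ->] /=; apply: bndB => //; exact: (allP bL).
rewrite /cnt; apply: eq_bigr => s _.
rewrite big_cat /= big_map -(sum_links L' i0 d0 s) mulr_sumr; apply: eq_bigr => x _.
by rewrite mul1r mulrC.
Qed.

End Core.

Local Close Scope ring_scope.

Local Open Scope ring_scope.

Definition fmul m (P Q : seq (rat * seq (atomT m))) : seq (rat * seq (atomT m)) :=
  [seq (c.1 * e.1, c.2 ++ e.2) | c <- P, e <- Q].

Definition fone m : seq (rat * seq (atomT m)) := [:: (1, [::])].

Definition fshift m (P : seq (rat * seq (atomT m))) : seq (rat * seq (atomT m)) :=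
  [seq (c.1, [seq (t.1.1.+1, t.1.2.+1, t.2) | t <- c.2]) | c <- P].

Definition Ev (m : nat) : 'I_m -> 'rV[int]_m := fun r => delta_mx 0 r.

Definition wF m (j : nat) : seq (rat * seq (atomT m)) :=
  (1, [::]) :: (-1, [:: (0%N, j, 0)]) ::
  [seq (-1, [:: (0%N, j, Ev r)]) | r <- enum 'I_m] ++
  [seq (-1, [:: (0%N, j, - Ev r)]) | r <- enum 'I_m].

Fixpoint Phi m (n : nat) : seq (rat * seq (atomT m)) :=
  if n is n'.+1 then
    fmul (foldr (@fmul m) (fone m) [seq wF m j.+1 | j <- iota 0 n']) (fshift (Phi m n'))
  else fone m.

Definition Pfin m n : {poly rat} := \sum_(c <- Phi m n) c.1 *: Qp n c.2.

Section Eval.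
Variables (V : finType) (m : nat) (act : V -> 'rV[int]_m -> V) (x0 : V).

Definition evalF (P : seq (rat * seq (atomT m))) (s : seq V) : rat :=
  \sum_(c <- P) c.1 * \prod_(t <- c.2) (holds act x0 s t)%:R.

Definition wexpr (x y : V) : rat :=
  1 - (y == act x 0)%:R - \sum_(r <- enum 'I_m) (y == act x (Ev r))%:R
    - \sum_(r <- enum 'I_m) (y == act x (- Ev r))%:R.

Fixpoint pwA (s : seq V) : rat :=
  if s is x :: s' then (\prod_(y <- s') wexpr x y) * pwA s' else 1.

Lemma evalF_mul P Q s : evalF (fmul P Q) s = evalF P s * evalF Q s.
Proof.
rewrite /evalF /fmul big_allpairs_dep /= mulr_suml; apply: eq_bigr => c _.
rewrite mulr_sumr; apply: eq_bigr => e _ /=; rewrite big_cat /=; ring.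
Qed.

Lemma evalF_one s : evalF (fone m) s = 1.
Proof. by rewrite /evalF big_seq1 big_nil mulr1. Qed.

Lemma evalF_shift P x s : evalF (fshift P) (x :: s) = evalF P s.
Proof.
rewrite /evalF /fshift big_map; apply: eq_bigr => c _ /=; rewrite big_map.
by congr (_ * _); apply: eq_bigr => t _.
Qed.

Lemma sum_aux (l : seq 'I_m) (f : 'I_m -> 'rV[int]_m) j x s :
  \sum_(r <- l) (-1) * \prod_(t <- [:: (0%N, j.+1, f r)]) (holds act x0 (x :: s) t)%:R
  = - \sum_(r <- l) (nth x0 s j == act x (f r))%:R :> rat.
Proof.
rewrite -sumrN; apply: eq_bigr => r _; by rewrite big_seq1 /holds /= mulN1r.
Qed.

Lemma evalF_wF j x s : evalF (wF m j.+1) (x :: s) = wexpr x (nth x0 s j).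
Proof.
rewrite /evalF /wF /wexpr !big_cons big_cat /= !big_map !sum_aux big_nil. rewrite /holds /=; ring.
Qed.

Lemma evalF_prod_wF n x s :
  evalF (foldr (@fmul m) (fone m) [seq wF m j.+1 | j <- iota 0 n]) (x :: s) =
  \prod_(j <- iota 0 n) wexpr x (nth x0 s j).
Proof.
elim: (iota 0 n) => [|j l IH] /=; first by rewrite evalF_one big_nil.
by rewrite evalF_mul IH evalF_wF big_cons.
Qed.

Lemma evalF_Phi n s : size s = n -> pwA s = evalF (Phi m n) s.
Proof.
elim: n s => [|n IH] [|x s] //=; first by rewrite evalF_one.
case=> hs; rewrite evalF_mul evalF_shift -IH // evalF_prod_wF.
by rewrite (big_nth x0) hs /index_iota subn0.
Qed.

End Eval.

Lemma bnd_Ev m (r : 'I_m) : bnd 1 (Ev r).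
Proof.
apply/forallP => i; rewrite /Ev mxE; by case: (_ && _).
Qed.

Lemma Phi_bnd m n :
  all (fun c : rat * seq (atomT m) => all (fun t : atomT m => bnd 1 t.2) c.2) (Phi m n).
Proof.
have fmulB : forall P Q : seq (rat * seq (atomT m)),
  all (fun c : rat * seq (atomT m) => all (fun t : atomT m => bnd 1 t.2) c.2) P ->
  all (fun c : rat * seq (atomT m) => all (fun t : atomT m => bnd 1 t.2) c.2) Q ->
  all (fun c : rat * seq (atomT m) => all (fun t : atomT m => bnd 1 t.2) c.2) (fmul P Q).
  move=> P Q hP hQ; apply/allP => z /allpairsP[[c e] [cP eQ ->]] /=.
  by rewrite all_cat (allP hP c cP) (allP hQ e eQ).
elim: n => [|n IH] /=; first by [].

apply: (fmulB); last first.
  rewrite all_map; apply/allP => c /(allP IH) hc /=; by rewrite all_map.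
elim: (iota 0 n) => [|j l IHl] /=; first by [].
apply: (fmulB) => //=; rewrite bnd0 /= all_cat !all_map.
apply/andP; split; apply/allP => r _ /=; rewrite andbT; [exact: bnd_Ev | exact: bndN (bnd_Ev r)].
Qed.

Lemma mem_allseqs (V : finType) n s : s \in allseqs V n -> size s = n.
Proof.
elim: n s => [|n IH] s /=; first by rewrite inE => /eqP ->.
by case/allpairsPdep => x [t [_ /IH <- ->]].
Qed.

Lemma abstract_main (V : finType) m (act : V -> 'rV[int]_m -> V) (x0 : V) n :
  (forall x d e, act (act x d) e = act x (d + e)) ->
  (forall x, act x 0 = x) ->
  (forall x d, bnd (2 ^ n) d -> act x d = x -> d = 0) ->
  \sum_(s <- allseqs V n) pwA act s = (Pfin m n).[#|V|%:R].
Proof.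
move=> actA act0 inj.
rewrite big_seq (eq_bigr (evalF act x0 (Phi m n))); last first.
  by move=> s /mem_allseqs; apply: evalF_Phi.
rewrite -big_seq /evalF exchange_big /Pfin horner_sum; apply: eq_big_seq => c cP.
rewrite hornerZ -mulr_sumr -(@cnt_Qp V m act x0 actA act0 n 1 c.2) //.
- by have := allP (Phi_bnd m n) c cP.
- by move=> x d; rewrite mul1n; apply: inj.
Qed.

Local Close Scope ring_scope.

Local Open Scope ring_scope.

Definition zp (z : int) : nat := if z is Posz n then n else 0%N.
Definition zn (z : int) : nat := if z is Negz n then n.+1 else 0%N.

Lemma exprz_pn (R : unitRingType) (x : R) (z : int) : x ^ z = x ^+ zp z / x ^+ zn z.
Proof. by case: z => n /=; rewrite /exprz ?expr0 ?invr1 ?mulr1 ?mul1r. Qed.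

Lemma zp_le z : (zp z <= absz z)%N. Proof. by case: z. Qed.
Lemma zn_le z : (zn z <= absz z)%N. Proof. by case: z. Qed.

Definition Apos (a : seq nat) (d : 'rV[int]_(size a)) : nat :=
  (\prod_(r < size a) (nth 0%N a r) ^ (zp (d ord0 r)))%N.
Definition Aneg (a : seq nat) (d : 'rV[int]_(size a)) : nat :=
  (\prod_(r < size a) (nth 0%N a r) ^ (zn (d ord0 r)))%N.

Lemma prod_pn (F : fieldType) (a : seq nat) (d : 'rV[int]_(size a)) :
  \prod_(r < size a) ((nth 0%N a r)%:R : F) ^ (d ord0 r) = (Apos d)%:R / (Aneg d)%:R.
Proof.
rewrite /Apos /Aneg !natr_prod -prodfV -big_split /=; apply: eq_bigr => r _.
by rewrite exprz_pn !natrX.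
Qed.

Definition Nb (a : seq nat) (M : nat) : nat := (\prod_(r < size a) (nth 0%N a r) ^ M)%N.

Lemma Apos_lt a M (d : 'rV[int]_(size a)) p : all (fun x => 2 <= x)%N a -> bnd M d -> (Nb a M < p)%N ->
  (Apos d < p)%N /\ (Aneg d < p)%N.
Proof.
move=> ha /forallP hd hp.
have pos : forall r : 'I_(size a), (0 < nth 0%N a r)%N.
  move=> r; have := all_nthP 0%N ha r (ltn_ord r); lia.
split; apply: leq_ltn_trans hp; apply: leq_prod => r _; rewrite leq_pexp2l //.
- exact: leq_trans (zp_le _) (hd r).
- exact: leq_trans (zn_le _) (hd r).
Qed.

Lemma nt_key a M (d : 'rV[int]_(size a)) p : prime p ->
  all (fun x => 2 <= x)%N a -> mult_indep a -> bnd M d -> (Nb a M < p)%N ->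
  \prod_(r < size a) ((nth 0%N a r)%:R : 'F_p) ^ (d ord0 r) = 1 -> d = 0.
Proof.
rewrite prod_pn => pr ha hind hd hp h1.
have [lA lB] := Apos_lt ha hd hp.
have nB : (Aneg d)%:R != 0 :> 'F_p.
  by apply/eqP => e0; move: h1; rewrite e0 invr0 mulr0 => /eqP; rewrite eq_sym oner_eq0.
have eAB : (Apos d)%:R = (Aneg d)%:R :> 'F_p.
  by rewrite -(divfK nB (Apos d)%:R) h1 mul1r.
have eN : Apos d = Aneg d.
  by move: (congr1 (fun x : 'F_p => nat_of_ord x) eAB) => /=; rewrite !val_Fp_nat // !modn_small.
have pos : (0 < Aneg d)%N.
  rewrite /Aneg prodn_gt0 // => r; rewrite expn_gt0.
  by have := all_nthP 0%N ha r (ltn_ord r); case: (nth _ _ _).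
have hr : \prod_(r < size a) ((nth 0%N a r)%:R : rat) ^ (d ord0 r) = 1.
  by rewrite prod_pn eN divff // pnatr_eq0 -lt0n.
apply/matrixP => i j; rewrite (ord1 i) mxE; exact: (hind (fun r => d ord0 r) hr j).
Qed.

Definition toF k (i : nat) : 'F_(k.+1) := (i.+1)%:R.
Definition phiF (a : seq nat) k (d : 'rV[int]_(size a)) : 'F_(k.+1) :=
  \prod_(r < size a) ((nth 0%N a r)%:R : 'F_(k.+1)) ^ (d ord0 r).
Definition actc (a : seq nat) k (i : 'I_k) (d : 'rV[int]_(size a)) : 'I_k :=
  insubd i (nat_of_ord (toF k i * phiF k d)).-1.

Section Comp.
Variables (a : seq nat) (k : nat).
Hypothesis pr : prime k.+1.
Hypothesis hna : forall r : 'I_(size a), ((nth 0%N a r)%:R : 'F_(k.+1)) != 0.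

Lemma valF (x : 'F_(k.+1)) : (x < k.+1)%N.
Proof. by apply: leq_trans (ltn_ord x) _; rewrite (Fp_cast pr). Qed.

Lemma natF (x : 'F_(k.+1)) : (nat_of_ord x)%:R = x.
Proof. by apply: val_inj; rewrite /= val_Fp_nat // modn_small // valF. Qed.

Lemma toF_val (i : nat) : (i < k)%N -> nat_of_ord (toF k i) = i.+1.
Proof. by move=> ik; rewrite /toF val_Fp_nat // modn_small. Qed.

Lemma toF_inj (i j : 'I_k) : toF k i = toF k j -> i = j.
Proof.
move=> /(congr1 (fun x : 'F_(k.+1) => nat_of_ord x)) /=.
by rewrite !toF_val // => -[] /val_inj.
Qed.

Lemma toF_neq0 (i : 'I_k) : toF k i != 0.
Proof.
apply/eqP => /(congr1 (fun x : 'F_(k.+1) => nat_of_ord x)) /=.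
by rewrite toF_val.
Qed.

Lemma phiD (d e : 'rV[int]_(size a)) : @phiF a k (d + e) = @phiF a k d * @phiF a k e.
Proof.
rewrite /phiF -big_split /=; apply: eq_bigr => r _.
by rewrite mxE exprzDr // unitfE.
Qed.

Lemma phi0 : @phiF a k 0 = 1.
Proof. by rewrite /phiF big1 // => r _; rewrite mxE expr0z. Qed.

Lemma phi_neq0 (d : 'rV[int]_(size a)) : @phiF a k d != 0.
Proof. by apply/prodf_neq0 => r _; rewrite expfz_neq0. Qed.

Lemma toF_actc (i : 'I_k) (d : 'rV[int]_(size a)) : toF k (actc i d) = toF k i * @phiF a k d.
Proof.
set y := toF k i * @phiF a k d.
have y0 : y != 0 by rewrite mulf_neq0 ?toF_neq0 ?phi_neq0.
have yp : (0 < nat_of_ord y)%N.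
  by rewrite lt0n; apply: contra y0 => /eqP h; apply/eqP; apply: val_inj.
have yk : ((nat_of_ord y).-1 < k)%N by have := valF y; lia.
rewrite /actc -/y /toF val_insubd yk prednK //; exact: natF.
Qed.

Lemma actcA (i : 'I_k) (d e : 'rV[int]_(size a)) : actc (actc i d) e = actc i (d + e).
Proof. by apply: toF_inj; rewrite !toF_actc phiD mulrA. Qed.

Lemma actc0 (i : 'I_k) : actc i (0 : 'rV[int]_(size a)) = i.
Proof. by apply: toF_inj; rewrite toF_actc phi0 mulr1. Qed.

Lemma actc_fix (i : 'I_k) (d : 'rV[int]_(size a)) : actc i d = i -> @phiF a k d = 1.
Proof.
move=> h0; have := congr1 (fun j : 'I_k => toF k j) h0; rewrite /= toF_actc => h.
by apply: (mulfI (toF_neq0 i)); rewrite h mulr1.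
Qed.

Lemma phiE (r : 'I_(size a)) : @phiF a k (Ev r) = (nth 0%N a r)%:R.
Proof.
rewrite /phiF (bigD1 r) //= big1 ?mulr1.
  by rewrite /Ev mxE !eqxx /= expr1z.
by move=> r' nr; rewrite /Ev mxE eqxx /= (negbTE nr) /= expr0z.
Qed.

Lemma modF x y : (x == y %[mod k.+1]) = ((x%:R : 'F_(k.+1)) == y%:R).
Proof. by rewrite -(inj_eq val_inj) /= !val_Fp_nat. Qed.

Lemma toF_eq (i j : 'I_k) : (toF k i == toF k j) = (i == j).
Proof. by apply/eqP/eqP => [/toF_inj|->]. Qed.

Lemma step_eq (i j : 'I_k) (r : 'I_(size a)) :
  (i.+1 == nth 0%N a r * j.+1 %[mod k.+1]) = (i == actc j (Ev r)).
Proof.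
by rewrite modF natrM -toF_eq toF_actc phiE mulrC.
Qed.

Lemma gadj_comp (i j : 'I_k) : gadj a k i.+1 j.+1 =
  (i != j) && [exists r : 'I_(size a), (j == actc i (Ev r)) || (j == actc i (- Ev r))].
Proof.
rewrite /gadj eqSS; congr (_ && _).
apply/(has_nthP 0%N)/existsP => [[r rs /orP h] | [r /orP h]].
  exists (Ordinal rs); apply/orP; case: h => h; [right|left].
    by rewrite -(act_swap1 actcA actc0) -(step_eq i j (Ordinal rs)).
  by rewrite -(step_eq j i (Ordinal rs)).
exists (nat_of_ord r); first exact: ltn_ord.
apply/orP; case: h => h; [right|left].
  by rewrite (step_eq j i r).
rewrite (step_eq i j r).
by rewrite (act_swap1 actcA actc0) opprK in h.
Qed.

End Comp.

Local Close Scope ring_scope.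

Local Open Scope ring_scope.

Section Gen.
Variables (V : finType) (m : nat) (act : V -> 'rV[int]_m -> V).
Hypothesis actA : forall x d e, act (act x d) e = act x (d + e).
Hypothesis act0 : forall x, act x 0 = x.
Hypothesis inj2 : forall x d, bnd 2 d -> act x d = x -> d = 0.

Lemma act_inj x d e : bnd 1 d -> bnd 1 e -> act x d = act x e -> d = e.
Proof.
move=> bd be h; apply/eqP; rewrite -subr_eq0; apply/eqP; apply: (inj2 (x := x)).
  exact: (bndB bd be).
by rewrite -actA h actA subrr act0.
Qed.

Definition Lst (x : V) : seq V :=
  [seq act x (Ev r) | r <- enum 'I_m] ++ [seq act x (- Ev r) | r <- enum 'I_m].

Lemma Ev_inj (r r' : 'I_m) : Ev r = Ev r' -> r = r'.
Proof.
move=> /matrixP /(_ ord0 r); rewrite /Ev !mxE !eqxx /=.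
by case: eqP => // _ /eqP; rewrite eq_sym oner_eq0.
Qed.

Lemma Ev_negE (r r' : 'I_m) : Ev r <> - Ev r'.
Proof.
move=> /matrixP /(_ ord0 r); rewrite /Ev !mxE !eqxx /=.
by case: eqP.
Qed.

Lemma Lst_uniq x : uniq (Lst x).
Proof.
rewrite cat_uniq; apply/and3P; split.
- rewrite map_inj_uniq ?enum_uniq // => r r' /act_inj h.
  by apply: Ev_inj; apply: h; apply: bnd_Ev.
- apply/hasP => -[y /mapP[r _ ->] /mapP[r' _ /act_inj h]].
  by apply: (@Ev_negE r' r); apply/esym; apply: h; [apply: bndN; apply: bnd_Ev | apply: bnd_Ev].
- rewrite map_inj_uniq ?enum_uniq // => r r' /act_inj h.
  by apply: Ev_inj; apply: oppr_inj; apply: h; apply: bndN; apply: bnd_Ev.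
Qed.

Lemma notin_Lst x : x \notin Lst x.
Proof.
rewrite mem_cat; apply/norP; split; apply/mapP => -[r _ /esym /inj2 h].
  by have /eqP := h (bndW (isT : (1 <= 2)%N) (bnd_Ev r)); rewrite /Ev => /eqP /matrixP /(_ ord0 r); rewrite !mxE !eqxx.
have := h (bndW (isT : (1 <= 2)%N) (bndN (bnd_Ev r))).
by move=> /matrixP /(_ ord0 r); rewrite /Ev !mxE !eqxx.
Qed.

Lemma sum_count (l : seq 'I_m) (f : 'I_m -> V) y :
  \sum_(r <- l) (y == f r)%:R = (count_mem y (map f l))%:R :> rat.
Proof.
elim: l => [|r l IH]; first by rewrite big_nil.
by rewrite big_cons IH /= natrD eq_sym.
Qed.

Lemma wexpr_eq x y (adj : bool) : adj = (x != y) && (y \in Lst x) ->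
  wexpr act x y = ((x != y) && ~~ adj)%:R.
Proof.
move=> ->; rewrite /wexpr act0 !sum_count -addrA -opprD -natrD -count_cat.
rewrite -/(Lst x) count_uniq_mem ?Lst_uniq //.
case: (eqVneq x y) => [<-|nxy] /=.
  by rewrite (negbTE (notin_Lst x)) /=; ring.
case: (y \in Lst x) => /=; ring.
Qed.

End Gen.

Lemma prod_bool (T : Type) (s : seq T) (b : T -> bool) :
  \prod_(y <- s) (b y)%:R = (all b s)%:R :> rat.
Proof.
elim: s => [|x s IH]; first by rewrite big_nil.
by rewrite big_cons IH /= -natrM mulnb.
Qed.

Lemma pwA_eq (V : finType) m (act : V -> 'rV[int]_m -> V) (e : rel V) :
  (forall x y, e x y = e y x) -> (forall x, ~~ e x x) ->
  (forall x y, wexpr act x y = ((x != y) && ~~ e x y)%:R) ->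
  forall s, pwA act s =
    (uniq s && [forall u in [set x in s], forall v in [set x in s], ~~ e u v])%:R.
Proof.
move=> esy eirr hw; elim=> [|x s IH] /=.
  suff h : [forall u in [set x in ([::] : seq V)], forall v in [set x in ([::] : seq V)], ~~ e u v].
    by rewrite h.
  by apply/forallP => u; rewrite inE in_nil.
rewrite IH (eq_bigr _ (fun y _ => hw x y)) prod_bool -natrM mulnb; congr (_%:R).
set I := [forall u in [set x0 in x :: s], _]; set I' := [forall u in [set x0 in s], _].
have -> : I = all (fun y => ~~ e x y) s && I'.
  apply/idP/idP.
    move=> /forallP hI; apply/andP; split.
      apply/allP => y ys; have := hI x; rewrite !inE eqxx /= => /forallP /(_ y).
      by rewrite !inE ys orbT.
    apply/forallP => u; apply/implyP => us; apply/forallP => v; apply/implyP => vs.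
    rewrite !inE in us vs.
    by have := hI u; rewrite !inE us orbT /= => /forallP /(_ v); rewrite !inE vs orbT.
  case/andP => /allP ha /forallP hI'; apply/forallP => u; apply/implyP.
  rewrite !inE => /orP hu; apply/forallP => v; apply/implyP; rewrite !inE => /orP hv.
  case: hu => [/eqP ->|us]; case: hv => [/eqP ->|vs]; first exact: eirr.
  - exact: ha.
  - by rewrite esy; apply: ha.
  - by have := hI' u; rewrite !inE us => /forallP /(_ v); rewrite !inE vs.
have -> : all (fun y => (x != y) && ~~ e x y) s = (x \notin s) && all (fun y => ~~ e x y) s.
  rewrite all_predI; congr (_ && _); apply/allP/idP => [h | h y ys].
    by apply/negP => /h; rewrite eqxx.
  by apply: contra h => /eqP ->.
by rewrite -!andbA; congr (_ && _); rewrite andbCA.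
Qed.

Lemma allseqs_uniq (V : finType) n : uniq (allseqs V n).
Proof.
elim: n => [|n IH] //=; apply: allpairs_uniq => //; first exact: enum_uniq.
by move=> [x s] [y t] _ _ /= [-> ->].
Qed.

Lemma mem_allseqsE (V : finType) n s : (s \in allseqs V n) = (size s == n).
Proof.
elim: n s => [|n IH] s /=; first by rewrite inE; case: s.
apply/allpairsPdep/idP => [[x [t [_ ht ->]]] | ].
  by rewrite /= eqSS -IH.
case: s => [|x s] //= hs; exists x, s; split => //; first by rewrite mem_enum.
by rewrite IH.
Qed.

Lemma perm_set (V : finType) (S : {set V}) (s : seq V) :
  ((S == [set x in s]) && uniq s) = perm_eq s (enum S).
Proof.
apply/idP/idP.
  case/andP => /eqP -> us; apply: uniq_perm => //; first exact: enum_uniq.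
  by move=> x; rewrite mem_enum inE.
move=> h; rewrite (perm_uniq h) enum_uniq andbT; apply/eqP/setP => x.
by rewrite inE (perm_mem h) mem_enum.
Qed.

Lemma count_perm (V : finType) n (S : {set V}) :
  count (fun s => perm_eq s (enum S)) (allseqs V n) = if #|S| == n then n`! else 0%N.
Proof.
case: eqP => hS.
  rewrite -size_filter.
  have -> : size [seq s <- allseqs V n | perm_eq s (enum S)] = size (permutations (enum S)).
    apply: perm_size; apply: uniq_perm.
    - exact: filter_uniq (allseqs_uniq V n).
    - exact: permutations_uniq.
    move=> s; rewrite mem_filter mem_permutations mem_allseqsE.
    case h: (perm_eq s (enum S)) => //=.
    by rewrite (perm_size h) -hS cardE eqxx.
  by rewrite size_permutations ?enum_uniq // -hS cardE.
apply/eqP; rewrite -leqn0 leqNgt -has_count; apply/hasP => -[s].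
rewrite mem_allseqsE => /eqP sn /perm_size h.
by apply: hS; rewrite cardE -h.
Qed.

Lemma count_sets (V : finType) n (P : {set V} -> bool) :
  \sum_(s <- allseqs V n) ((uniq s && P [set x in s])%:R : rat) =
  (n`! * #|[set S : {set V} | (#|S| == n) && P S]|)%:R.
Proof.
have e1 : forall s : seq V, ((uniq s && P [set x in s])%:R : rat) =
    \sum_(S : {set V}) ((perm_eq s (enum S)) && P S)%:R.
  move=> s; rewrite (bigD1 [set x in s]) //= big1 ?addr0.
    by rewrite -perm_set eqxx /=.
  by move=> S nS; rewrite -perm_set (negbTE nS).
rewrite (eq_bigr _ (fun s _ => e1 s)) exchange_big /=.
rewrite natrM -sum1_card natr_sum mulr_sumr [RHS]big_mkcond /=; apply: eq_bigr => S _.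
rewrite inE.
have -> : \sum_(s <- allseqs V n) ((perm_eq s (enum S) && P S)%:R : rat) =
    (P S)%:R * (count (fun s => perm_eq s (enum S)) (allseqs V n))%:R.
  elim: (allseqs V n) => [|s l IH]; first by rewrite big_nil mulr0.
  by rewrite big_cons IH /= natrD mulrDr; case: (perm_eq _ _); case: (P S) => //=; ring.
rewrite count_perm; case: (P S); case: (#|S| == n) => /=; ring.
Qed.

Local Close Scope ring_scope.

Local Open Scope ring_scope.

Definition actU (a ks : seq nat) (u : uvert ks) (d : 'rV[int]_(size a)) : uvert ks :=
  Tagged (fun t : 'I_(size ks) => 'I_(nth 0%N ks t))
    (@actc a (nth 0%N ks (tag u)) (tagged u) d).

Lemma eqU ks (u v : uvert ks) :
  (u == v) = (tag u == tag v) && (nat_of_ord (tagged u) == nat_of_ord (tagged v)).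
Proof.
apply/eqP/andP => [-> | ]; first by rewrite !eqxx.
case: u v => [t i] [t' j] /= [/eqP e]; subst t' => /eqP /val_inj ->.
by [].
Qed.

Lemma gadj_sym a k i j : gadj a k i j = gadj a k j i.
Proof.
rewrite /gadj eq_sym; congr (_ && _); apply: eq_has => x; exact: orbC.
Qed.

Lemma uadj_sym a ks (u v : uvert ks) : uadj a u v = uadj a v u.
Proof.
case: u v => [t i] [t' j]; rewrite /uadj /=.
case: eqP => [e|ne]; last by case: eqP => // /esym.
by subst; rewrite eqxx gadj_sym.
Qed.

Lemma uadj_irr a ks (u : uvert ks) : ~~ uadj a u u.
Proof. by case: u => t i; rewrite /uadj /gadj /= !eqxx. Qed.

Lemma mem_mapE (T : finType) (V : eqType) (f : T -> V) y :
  (y \in [seq f r | r <- enum T]) = [exists r, y == f r].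
Proof.
apply/mapP/existsP => [[r _ ->]|[r /eqP ->]]; exists r => //.
by rewrite mem_enum.
Qed.

Section U.
Variables (a ks : seq nat).
Hypothesis hpr : forall t : 'I_(size ks), prime (nth 0%N ks t).+1.
Hypothesis hna : forall (t : 'I_(size ks)) (r : 'I_(size a)),
  ((nth 0%N a r)%:R : 'F_((nth 0%N ks t).+1)) != 0.

Lemma actUA (u : uvert ks) (d e : 'rV[int]_(size a)) : actU (actU u d) e = actU u (d + e).
Proof. by case: u => t i; rewrite /actU /= (actcA (hpr t) (hna t)). Qed.

Lemma actU0 (u : uvert ks) : actU u (0 : 'rV[int]_(size a)) = u.
Proof. by case: u => t i; rewrite /actU /= (actc0 (hpr t) (hna t)). Qed.

Lemma actU_fix (u : uvert ks) (d : 'rV[int]_(size a)) : actU u d = u -> @phiF a (nth 0%N ks (tag u)) d = 1.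
Proof.
case: u => t i /= h; apply: (actc_fix (hpr t) (hna t) (i := i)).
apply: val_inj; move: (congr1 (fun w : uvert ks => nat_of_ord (tagged w)) h).
by rewrite /actU /=.
Qed.

Lemma uadjU (u v : uvert ks) : uadj a u v = (u != v) && (v \in Lst (@actU a ks) u).
Proof.
rewrite /Lst mem_cat !mem_mapE.
case: u v => [t i] [t' j]; rewrite /uadj /=.
case: (eqVneq t t') => [e|ne]; last first.
  rewrite /=; symmetry; apply/andP => -[_ /orP h].
  by case: h => /existsP [r]; rewrite eqU /= eq_sym (negbTE ne).
subst t'; rewrite gadj_comp ?hpr ?hna // eqU /= eqxx /=; congr (_ && _).
apply/existsP/orP => [[r /orP [h|h]] | [/existsP [r h] | /existsP [r h]]].
- by left; apply/existsP; exists r; rewrite eqU /= eqxx /= val_eqE.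
- by right; apply/existsP; exists r; rewrite eqU /= eqxx /= val_eqE.
- by exists r; rewrite eqU /= eqxx /= val_eqE in h; rewrite h.
- by exists r; rewrite eqU /= eqxx /= val_eqE in h; rewrite h orbT.
Qed.

End U.

Local Close Scope ring_scope.

Lemma Nb_ge a M (r : 'I_(size a)) : (1 <= M)%N -> all (fun x => 2 <= x)%N a ->
  (nth 0%N a r <= Nb a M)%N.
Proof.
move=> M1 ha.
have pos : forall r : 'I_(size a), (0 < nth 0%N a r)%N.
  move=> r'; have := all_nthP 0%N ha r' (ltn_ord r'); lia.
rewrite /Nb (bigD1 r) //=.
apply: leq_trans (leq_pmulr _ _).
  by rewrite -{1}(expn1 (nth 0%N a r)) leq_pexp2l.
by rewrite prodn_gt0 // => i; rewrite expn_gt0 pos.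
Qed.

Lemma card_uvert ks : #|uvert ks| = sumn ks.
Proof.
rewrite /uvert card_tagged; congr sumn.
rewrite (eq_map (fun t => card_ord _)).
rewrite -[in RHS](mkseq_nth 0%N ks) /mkseq -val_enum_ord -map_comp.
by [].
Qed.

Unset Implicit Arguments.

Theorem theorem3p1 (m n : nat) (hm : (1 <= m)%N) :
  exists P : {poly rat},
    forall a : seq nat,
      size a = m -> uniq a -> all (fun x => 2 <= x)%N a -> mult_indep a ->
      exists N : nat,
        forall ks : seq nat,
          (1 <= size ks)%N ->
          all (fun k => (0 < k)%N && prime k.+1 && (N < k.+1)%N) ks ->
          ((num_indep n a ks)%:R : rat) = (P.[(sumn ks)%:R])%R.
Proof.
pose P0 : {poly rat} := ((n`!%:R)^-1 *: Pfin m n)%R.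
exists P0.
move=> a sa ua ha hind; subst m.
exists (Nb a (2 ^ n.+1)).
move=> ks hks hall.
have hk : forall t : 'I_(size ks), [/\ (0 < nth 0%N ks t)%N, prime (nth 0%N ks t).+1
    & (Nb a (2 ^ n.+1) < (nth 0%N ks t).+1)%N].
  move=> t; have := all_nthP 0%N hall t (ltn_ord t).
  by case/andP => /andP [h1 h2] h3; split.
have hpr : forall t : 'I_(size ks), prime (nth 0%N ks t).+1 by move=> t; case: (hk t).
have hna : forall (t : 'I_(size ks)) (r : 'I_(size a)),
    (((nth 0%N a r)%:R : 'F_((nth 0%N ks t).+1)) != 0)%R.
  move=> t r; case: (hk t) => _ pt Nt; apply/eqP => h.
  move: (congr1 (fun x : 'F_((nth 0%N ks t).+1) => nat_of_ord x) h) => /=.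
  rewrite val_Fp_nat // modn_small; last first.
    apply: leq_ltn_trans Nt; apply: Nb_ge => //; by rewrite expn_gt0.
  have := all_nthP 0%N ha r (ltn_ord r); move=> h2 h3; rewrite h3 in h2.
  by [].

have t0lt : (0 < size ks)%N by [].
set t0 : 'I_(size ks) := Ordinal t0lt.
have [k0 _ _] := hk t0.
pose x0 : uvert ks := Tagged (fun t : 'I_(size ks) => 'I_(nth 0%N ks t)) (Ordinal k0).
have inj : forall (u : uvert ks) (d : 'rV[int]_(size a)),
    bnd (2 ^ n.+1) d -> actU u d = u -> d = 0%R.
  move=> u d bd /(actU_fix hpr hna) h.
  case: (hk (tag u)) => _ pt Nt.
  exact: (nt_key pt ha hind bd Nt h).
have inj2 : forall (u : uvert ks) (d : 'rV[int]_(size a)),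
    bnd 2 d -> actU u d = u -> d = 0%R.
  move=> u d bd; apply: inj; apply: bndW bd.
  by rewrite expnS leq_pmulr // expn_gt0.
have injn : forall (u : uvert ks) (d : 'rV[int]_(size a)),
    bnd (2 ^ n) d -> actU u d = u -> d = 0%R.
  move=> u d bd; apply: inj; apply: bndW bd.
  by rewrite leq_pexp2l.
have hw : forall x y : uvert ks,
    wexpr (@actU a ks) x y = (((x != y) && ~~ uadj a x y)%:R)%R.
  move=> x y; apply: (wexpr_eq (actUA hpr hna) (actU0 hpr hna) inj2).
  exact: uadjU.
have e2 := pwA_eq (@uadj_sym a ks) (@uadj_irr a ks) hw.
have e3 := abstract_main x0 (actUA hpr hna) (actU0 hpr hna) injn.
have e1 := count_sets n (@indep_set a ks).
rewrite hornerZ -card_uvert -e3 (eq_bigr _ (fun s _ => e2 s)).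
rewrite /indep_set in e1; rewrite e1 /num_indep /indep_set natrM mulKf //.
by rewrite pnatr_eq0 -lt0n fact_gt0.
Qed.
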